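(* In the induced continuum market $\widehat\Gamma$, let $M$ be a stable pseudo-matching, choose $f'\in F$, and let $M'$ be a pseudo-matching such that $M'_{f'}(w)=0$ whenever $M_{f'}(w)=0$ ($w\in W$), and $M'_f=M_f$ for all $f\ne f'$. Then in $M'$ there is no blocking coalition involving any firm $f\in F$ with $f\neq f'$; that is, there are no $f\in F\setminus\{f'\}$ and $M''\in[0,1]^W$ with $M''\succ_f M'_f$ and $M''\le A^{\preceq f}(M')$.
   Context: Finite firms $F$, finite workers $W=\{w_1,\dots,w_n\}$, null firm $\o$, $\widetilde F=F\cup\{\o\}$; each worker $w$ has a strict complete transitive preference $\succ_w$ over $\widetilde F$ ($f\succeq_w f'$ means $f\succ_w f'$ or $f=f'$); each firm $f\in F$ has a strict complete transitive preference $\succ_f$ over $2^W$, subsets identified with indicator vectors. For $f\in F$ list the sets $S\succ_f\emptyset$ as $\mathbf u^1\succ_f\cdots\succ_f\mathbf u^L$. For $\mathbf x\in[0,1]^W$: $t_0=0$, $\mathbf z^0=\mathbf x$, $t_k=\min\{1-\sum_{j<k}t_j,\ z^{k-1}_i: u^k_i\ne 0\}$, $\mathbf z^k=\mathbf z^{k-1}-t_k\mathbf u^k$, $\widehat{Ch}_f(\mathbf x)=\sum_{k=1}^L t_k\mathbf u^k$; $\widehat{Ch}_{\o}(\mathbf x)=\mathbf x$. A pseudo-matching is $M=(M_f)_{f\in\widetilde F}$ with $M_f\in[0,1]^W$. $\vee$ is componentwise max, $\le$ componentwise. $M''\succ_f M_f$ means $M''=\widehat{Ch}_f(M''\vee M_f)$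 and $M''\ne M_f$. $A^{\preceq f}(M)(w)=\sum_{f''\in\widetilde F:f\succeq_w f''}M_{f''}(w)$. A pseudo-matching $M$ is stable if (i) $M_f=\widehat{Ch}_f(M_f)$ for each $f\in F$ and $M_f(w)=0$ whenever $\o\succ_w f$; (ii) there are no $f\in F$, $M''\in[0,1]^W$ with $M''\succ_f M_f$ and $M''\le A^{\preceq f}(M)$. *)

(* Defs.v *)
From mathcomp Require Import all_boot all_order all_algebra.
From mathcomp Require Import reals.
Set Implicit Arguments. Unset Strict Implicit. Unset Printing Implicit Defensive.
Import Order.TTheory GRing.Theory Num.Theory.
Local Open Scope ring_scope.

(* Strict complete transitive preference (strict total order) as a relation
   [r x y] meaning "x is strictly preferred to y". *)
Definition strict_total_order (T : eqType) (r : rel T) : Prop :=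
  irreflexive r /\ transitive r /\ (forall x y, x != y -> r x y || r y x).

(* A market: firms F, workers W; the null firm is [None : option F], so the
   extended set of firms F~ is [option F].
   [prefW w f g] : f >_w g  (over option F)
   [prefF f S T] : S >_f T  (over 2^W = {set W}). *)
Record market (F W : finType) := Market {
  prefW : W -> rel (option F);
  prefF : F -> rel {set W};
  prefW_sto : forall w, strict_total_order (prefW w);
  prefF_sto : forall f, strict_total_order (prefF f)
}.

Section Continuum.
Variables (F W : finType) (R : realType) (Gm : market F W).

Local Notation vec := {ffun W -> R}.

Definition ind (S : {set W}) : vec := [ffun w => (w \in S)%:R].

(* u^1 >_f ... >_f u^L : the sets strictly preferred to the empty set,
   listed from best to worst. *)
Definition acceptable_list (f : F) : seq {set W} :=
  [seq S <- sort (prefF Gm f) (enum {set W}) | prefF Gm f S set0].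

(* The greedy procedure: [s] is the remaining budget 1 - sum_{j<k} t_j,
   [z] is z^{k-1}; t_k = min(s, min_{i : u^k_i <> 0} z_i). *)
Fixpoint ch_aux (l : seq {set W}) (z : vec) (s : R) : vec :=
  match l with
  | [::] => [ffun => 0]
  | u :: l' =>
      let t := \big[Num.min/s]_(i in u) z i in
      [ffun w => t * ind u w + ch_aux l' [ffun w' => z w' - t * ind u w'] (s - t) w]
  end.

Definition ChHat (f : option F) (x : vec) : vec :=
  match f with
  | Some f0 => ch_aux (acceptable_list f0) x 1
  | None => x
  end.

Definition pmatching := option F -> vec.

Definition in01 (x : vec) : Prop := forall w, 0 <= x w <= 1.

Definition is_pmatching (M : pmatching) : Prop := forall f, in01 (M f).

Definition vjoin (x y : vec) : vec := [ffun w => Num.max (x w) (y w)].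

Definition vle (x y : vec) : Prop := forall w, x w <= y w.

Definition firm_prefers (f : F) (M'' Mf : vec) : Prop :=
  M'' = ChHat (Some f) (vjoin M'' Mf) /\ M'' <> Mf.

Definition weakpref (w : W) (f g : option F) : bool := prefW Gm w f g || (f == g).

Definition Abelow (f : F) (M : pmatching) : vec :=
  [ffun w => \sum_(g : option F | weakpref w (Some f) g) M g w].

Definition blocks (M : pmatching) (f : F) (M'' : vec) : Prop :=
  in01 M'' /\ firm_prefers f M'' (M (Some f)) /\ vle M'' (Abelow f M).

Definition stable (M : pmatching) : Prop :=
  (forall f : F, M (Some f) = ChHat (Some f) (M (Some f)) /\
     (forall w, prefW Gm w None (Some f) -> M (Some f) w = 0)) /\
  (forall (f : F) (M'' : vec), ~ blocks M f M'').

End Continuum.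

(* Main.v *)
Require Import Defs.
From mathcomp Require Import all_boot all_order all_algebra.
From mathcomp Require Import reals.
From mathcomp Require Import ring lra.
Set Implicit Arguments. Unset Strict Implicit. Unset Printing Implicit Defensive.
Import Order.TTheory GRing.Theory Num.Theory.
Local Open Scope ring_scope.

Fixpoint Tg (W : finType) (R : realType) (l : seq {set W}) (z : {ffun W -> R}) (s : R) : seq R :=
  match l with
  | [::] => [::]
  | u :: l' => let t := \big[Num.min/s]_(i in u) z i in
      t :: Tg l' [ffun w' => z w' - t * ind R u w'] (s - t)
  end.

Fixpoint vv (W : finType) (R : realType) (l : seq {set W}) (ts : seq R) : {ffun W -> R} :=
  match l, ts with
  | u :: l', t :: ts' => [ffun w => t * ind R u w + vv l' ts' w]
  | _, _ => [ffun => 0]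
  end.

Fixpoint feas (W : finType) (R : realType) (l : seq {set W}) (ts : seq R) (z : {ffun W -> R}) (s : R) : Prop :=
  match l, ts with
  | [::], [::] => 0 <= s /\ (forall w, 0 <= z w)
  | u :: l', t :: ts' => 0 <= t /\ feas l' ts' [ffun w => z w - t * ind R u w] (s - t)
  | _, _ => False
  end.

Lemma chT (W : finType) (R : realType) (l : seq {set W}) (z : {ffun W -> R}) s :
  ch_aux l z s = vv l (Tg l z s).
Proof. by elim: l z s => [|u l IH] z s //=; rewrite IH. Qed.

Lemma ind01 (W : finType) (R : realType) (u : {set W}) w :
  ind R u w = 0 \/ ind R u w = 1.
Proof. by rewrite /ind ffunE; case: (w \in u); [right|left]. Qed.

Lemma feas_nonneg (W : finType) (R : realType) (l : seq {set W}) (ts : seq R) (z : {ffun W -> R}) s :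
  feas l ts z s -> 0 <= s /\ (forall w, 0 <= z w).
Proof.
elim: l ts z s => [|u l IH] [|t ts] z s //= [t0 /IH [h1 h2]]; split.
  lra.
move=> w; have := h2 w; rewrite ffunE; case: (ind01 R u w) => ->; lra.
Qed.

Lemma feas_mono (W : finType) (R : realType) (l : seq {set W}) (ts : seq R) (z : {ffun W -> R}) s (z' : {ffun W -> R}) s' :
  feas l ts z s -> s <= s' -> (forall w, z w <= z' w) -> feas l ts z' s'.
Proof.
elim: l ts z s z' s' => [|u l IH] [|t ts] z s z' s' //=.
  move=> [h1 h2] hs hz; split; first lra. by move=> w; have := h2 w; have := hz w; lra.
move=> [t0 h] hs hz; split=> //; apply: (IH _ _ _ _ _ h); first lra.
by move=> w; rewrite !ffunE; have := hz w; lra.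
Qed.

Lemma feas_v (W : finType) (R : realType) (l : seq {set W}) (ts : seq R) (z : {ffun W -> R}) s :
  feas l ts z s -> forall w, 0 <= vv l ts w /\ vv l ts w <= z w /\ vv l ts w <= s.
Proof.
elim: l ts z s => [|u l IH] [|t ts] z s //=.
  by move=> [h1 h2] w; rewrite ffunE; split; [|split]; rewrite ?h2.
move=> [t0 /IH h] w; have := h w; rewrite !ffunE; case: (w \in u) => /=; lra.
Qed.

Lemma feas_tight (W : finType) (R : realType) (l : seq {set W}) (ts : seq R) (z : {ffun W -> R}) s :
  feas l ts z s -> feas l ts (vv l ts) s.
Proof.
elim: l ts z s => [|u l IH] [|t ts] z s //=.
  by move=> [h1 h2]; split=> // w; rewrite ffunE.
move=> [t0 h]; split=> //; apply: (feas_mono (IH _ _ _ h)); first lra.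
by move=> w; rewrite !ffunE; lra.
Qed.

Lemma feas_T (W : finType) (R : realType) (l : seq {set W}) (z : {ffun W -> R}) s :
  0 <= s -> (forall w, 0 <= z w) -> feas l (Tg l z s) z s.
Proof.
elim: l z s => [|u l IH] z s //= hs hz.
set t := \big[_/_]_(i in u) _.
have t0 : 0 <= t by apply: le_bigmin.
have ts : t <= s by apply: bigmin_le_id.
have tz : forall i, i \in u -> t <= z i by move=> i hi; apply: bigmin_le_cond.
split=> //; apply: IH; first lra.
move=> w; rewrite !ffunE; case hw: (w \in u).
  by have := tz w hw; rewrite /=; lra.
by have := hz w; rewrite /=; lra.
Qed.

Fixpoint lexle (R : realType) (a b : seq R) : bool :=
  match a, b with
  | x :: a', y :: b' => (x < y) || ((x == y) && lexle a' b')
  | _, _ => true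
  end.

Fixpoint mixs (R : realType) (lam : R) (a b : seq R) : seq R :=
  match a, b with
  | x :: a', y :: b' => ((1 - lam) * x + lam * y) :: mixs lam a' b'
  | _, _ => [::]
  end.

Lemma feas_eq (W : finType) (R : realType) (l : seq {set W}) (ts : seq R) (z : {ffun W -> R}) s (z' : {ffun W -> R}) s' :
  feas l ts z s -> s = s' -> (forall w, z w = z' w) -> feas l ts z' s'.
Proof.
move=> h hs hz; apply: (feas_mono h); first by rewrite hs.
by move=> w; rewrite hz.
Qed.

Lemma feas_lex (W : finType) (R : realType) (l : seq {set W}) (ts : seq R) (z : {ffun W -> R}) s :
  feas l ts z s -> lexle ts (Tg l z s).
Proof.
elim: l ts z s => [|u l IH] [|a ts] z s //= [a0 h].
have [hs hz] := feas_nonneg h.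
set t := \big[_/_]_(i in u) _.
have at_ : a <= t.
  apply: le_bigmin; first by lra.
  move=> i hi; have := hz i; rewrite !ffunE hi /=; lra.
move: at_; rewrite le_eqVlt => /orP [/eqP eat|->] //.
apply/orP; right; apply/andP; split; first by apply/eqP.
by rewrite -eat; apply: IH.
Qed.

Lemma feas_size (W : finType) (R : realType) (l : seq {set W}) (ts : seq R) (z : {ffun W -> R}) s :
  feas l ts z s -> size ts = size l.
Proof. by elim: l ts z s => [|u l IH] [|a ts] z s //= [_ /IH ->]. Qed.

Lemma size_Tg (W : finType) (R : realType) (l : seq {set W}) (z : {ffun W -> R}) s :
  size (Tg l z s) = size l.
Proof. by elim: l z s => [|u l IH] z s //=; rewrite IH. Qed.

Lemma lex_antisym (R : realType) (a b : seq R) :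
  size a = size b -> lexle a b -> lexle b a -> a = b.
Proof.
elim: a b => [|x a IH] [|y b] //= [hs] /orP [hxy|/andP [/eqP exy hab]] /orP [hyx|/andP [/eqP eyx hba]].
- by move: (lt_trans hxy hyx); rewrite ltxx.
- by move: hxy; rewrite eyx ltxx.
- by move: hyx; rewrite exy ltxx.
- by rewrite exy (IH b).
Qed.

Lemma lex_mix_contra (R : realType) (lam : R) (a b : seq R) :
  size a = size b -> lexle a b -> a <> b -> 0 < lam -> lexle (mixs lam a b) a -> False.
Proof.
move=> + + + l0; elim: a b => [|x a IH] [|y b] //= [hs] /orP [hxy|/andP [/eqP exy hab]] hne.
- have hp : x < (1 - lam) * x + lam * y by nra.
  move=> /orP [h|/andP [/eqP h _]].
    by move: (lt_trans hp h); rewrite ltxx.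
  by move: hp; rewrite h ltxx.
- subst y; have hp : (1 - lam) * x + lam * x = x by ring.
  rewrite hp ltxx eqxx /= => hm.
  apply: (IH b hs hab _ hm) => eab; apply: hne; by rewrite eab.
Qed.

Lemma feas_mix (W : finType) (R : realType) (l : seq {set W}) (lam : R) (a b : seq R)
  (za zb : {ffun W -> R}) sa sb :
  0 <= lam <= 1 -> feas l a za sa -> feas l b zb sb ->
  feas l (mixs lam a b) [ffun w => (1 - lam) * za w + lam * zb w] ((1 - lam) * sa + lam * sb).
Proof.
move=> hl; elim: l a b za zb sa sb => [|u l IH] [|x a] [|y b] za zb sa sb //=.
  move=> [h1 h2] [h3 h4]; split; first nra.
  by move=> w; rewrite ffunE; have := h2 w; have := h4 w; nra.
move=> [x0 ha] [y0 hb]; split; first nra.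
apply: (feas_eq (IH _ _ _ _ _ _ ha hb)); first ring.
by move=> w; rewrite !ffunE; ring.
Qed.

Lemma ch_fix (W : finType) (R : realType) (l : seq {set W}) (x x' : {ffun W -> R}) :
  (forall w, 0 <= x w) -> (forall w, ch_aux l x 1 w <= x' w /\ x' w <= x w) ->
  ch_aux l x' 1 = ch_aux l x 1.
Proof.
move=> hx hb; rewrite !chT in hb *.
have hT : feas l (Tg l x 1) x 1 by apply: feas_T.
have hv := feas_v hT.
have hx' : forall w, 0 <= x' w.
  by move=> w; have := hv w; have := hb w; lra.
have h1 : lexle (Tg l x 1) (Tg l x' 1).
  apply: feas_lex; apply: (feas_mono (feas_tight hT)) => // w; by case: (hb w).
have h2 : lexle (Tg l x' 1) (Tg l x 1).
  apply: feas_lex; apply: (feas_mono (feas_T l ler01 hx')) => // w; by case: (hb w).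
by rewrite (lex_antisym _ h2 h1) // !size_Tg.
Qed.

Lemma key (W : finType) (R : realType) (l : seq {set W}) (m x z : {ffun W -> R}) (lam : R) :
  0 < lam <= 1 -> (forall w, 0 <= m w) -> (forall w, m w <= z w) ->
  (forall w, (1 - lam) * m w + lam * z w <= x w) ->
  ch_aux l x 1 = m -> ch_aux l z 1 = m.
Proof.
move=> hl hm hmz hx; rewrite !chT => hcx.
have hz : forall w, 0 <= z w by move=> w; have := hm w; have := hmz w; lra.
have hx0 : forall w, 0 <= x w by move=> w; have := hm w; have := hmz w; have := hx w; nra.
have hTx : feas l (Tg l x 1) x 1 by apply: feas_T.
have hTm : feas l (Tg l x 1) m 1 by rewrite -hcx; apply: feas_tight hTx.
have hTz : feas l (Tg l z 1) z 1 by apply: feas_T.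
have hle : lexle (Tg l x 1) (Tg l z 1).
  by apply: feas_lex; apply: (feas_mono hTm).
have hmix := fun H => feas_mix (lam := lam) H hTm hTz.
have hle2 : lexle (mixs lam (Tg l x 1) (Tg l z 1)) (Tg l x 1).
  have hl' : 0 <= lam <= 1 by case/andP: hl => a b; apply/andP; split; lra.
  apply: feas_lex; apply: (feas_mono (hmix hl')); first lra.
  by move=> w; rewrite ffunE; apply: hx.
case: (eqVneq (Tg l x 1) (Tg l z 1)) => [<-|hne] //.
exfalso; apply: (lex_mix_contra _ hle _ _ hle2); first by rewrite !size_Tg.
  by apply/eqP.
by case/andP: hl.
Qed.

Theorem lemma5 (F W : finType) (R : realType) (Gm : market F W)
  (M : pmatching F W R) (f' : F) (M' : pmatching F W R) :
  is_pmatching M -> stable Gm M ->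
  is_pmatching M' ->
  (forall w, M (Some f') w = 0 -> M' (Some f') w = 0) ->
  (forall f : option F, f != Some f' -> M' f = M f) ->
  forall f : F, f != f' -> forall M'' : {ffun W -> R}, ~ blocks Gm M' f M''.
Proof.
move=> hM [hst1 hst2] hM' hsupp heq f hff' M'' [hin [[hfix hne] hle]].
set m := M (Some f).
have hm' : M' (Some f) = m by apply: heq; rewrite (inj_eq (@Some_inj _)).
rewrite hm' in hfix hne.
have hm0 : forall w, 0 <= m w by move=> w; case/andP: (hM (Some f) w).
have hm1 : forall w, m w <= 1 by move=> w; case/andP: (hM (Some f) w).
set A := Abelow Gm f M.
have hP : forall w, weakpref Gm w (Some f) (Some f) by move=> w; rewrite /weakpref eqxx orbT.
have hmA : forall w, m w <= A w.
  move=> w; rewrite /A /Abelow ffunE (bigD1 (Some f)) //= lerDl.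
  by apply: sumr_ge0 => g _; case/andP: (hM g w).
have hAA' : forall w, Abelow Gm f M' w = A w \/ m w < A w.
  move=> w; rewrite /A /Abelow !ffunE.
  case: (boolP (weakpref Gm w (Some f) (Some f'))) => hp.
    case: (eqVneq (M (Some f') w) 0) => h0.
      left; apply: eq_bigr => g _; case: (eqVneq g (Some f')) => [->|hg].
        by rewrite h0 (hsupp w h0).
      by rewrite heq.
    right; rewrite (bigD1 (Some f)) //= (bigD1 (Some f')) /=; last first.
      by rewrite hp /= (inj_eq (@Some_inj _)) eq_sym.
    have hpos : 0 < M (Some f') w.
      by rewrite lt_def h0 /=; case/andP: (hM (Some f') w).
    have hrest : 0 <= \sum_(i | (weakpref Gm w (Some f) i && (i != Some f)) && (i != Some f')) M i w.
      by apply: sumr_ge0 => g _; case/andP: (hM g w).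
    rewrite /m; lra.
  left; apply: eq_bigr => g hg; rewrite heq //.
  by apply/eqP => eg; move: hp; rewrite -eg hg.
have hS : forall w, A w < M'' w -> m w < A w.
  move=> w h; case: (hAA' w) => // e; have := hle w; rewrite e => h2.
  by move: (lt_le_trans h h2); rewrite ltxx.
set lam := \big[Num.min/1]_(w | A w < M'' w) (A w - m w).
have hl0 : 0 < lam.
  rewrite /lam; elim/big_ind: _ => //.
    by move=> a b ha hb; rewrite lt_min ha hb.
  by move=> w /hS h; rewrite subr_gt0.
have hl1 : lam <= 1 by apply: bigmin_le_id.
have hlA : forall w, A w < M'' w -> lam <= A w - m w.
  by move=> w h; apply: (bigmin_le_cond _ _ h).
set x : {ffun W -> R} := [ffun w => Num.max (m w) (Num.min (M'' w) (A w))].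
have hmx : forall w, m w <= x w by move=> w; rewrite ffunE le_max lexx.
have hxA : forall w, x w <= A w.
  by move=> w; rewrite ffunE ge_max hmA /= ge_min lexx orbT.
have hx0 : forall w, 0 <= x w by move=> w; apply: le_trans (hmx w).
set l := acceptable_list Gm f.
have hTx : feas l (Tg l x 1) x 1 by apply: feas_T.
have hv := feas_v hTx.
have hy01 : forall w, 0 <= ch_aux l x 1 w /\ ch_aux l x 1 w <= x w /\ ch_aux l x 1 w <= 1.
  by move=> w; rewrite chT; apply: hv.
apply: (hst2 f (ch_aux l x 1)); split; [|split; [split|]].
- by move=> w; have [a [b c]] := hy01 w; rewrite a c.
- rewrite /ChHat -/l; apply/esym/ch_fix => // w; rewrite /vjoin ffunE; split.
    by rewrite le_max lexx.
  by rewrite ge_max hmx; case: (hy01 w) => _ [->].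
- move=> hcx.
  have hz : ch_aux l (vjoin M'' m) 1 = m.
    apply: (key (lam := lam) _ hm0 _ _ hcx).
    - by rewrite hl0 hl1.
    - by move=> w; rewrite /vjoin ffunE le_max lexx orbT.
    move=> w.
    have hM1 : M'' w <= 1 by case/andP: (hin w).
    have ez : vjoin M'' m w = Num.max (M'' w) (m w) by rewrite ffunE.
    rewrite ez.
    have hmz : m w <= Num.max (M'' w) (m w) by rewrite le_max lexx orbT.
    case: (ltP (A w) (M'' w)) => h.
      have ex : x w = A w by rewrite ffunE (min_idPr (ltW h)) (max_idPr (hmA w)).
      rewrite ex (max_idPl (ltW (le_lt_trans (hmA w) h))).
      have := hlA w h; have := hmA w; have := hm0 w; have := hl0; nra.
    have ex : x w = Num.max (M'' w) (m w) by rewrite ffunE (min_idPl h) maxC.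
    rewrite ex; move: hmz; set t := Num.max _ _; have := hl0; have := hl1; nra.
  by apply: hne; rewrite hfix /ChHat -/l hz.
- by move=> w; apply: le_trans (hxA w); case: (hy01 w) => _ [].
Qed.
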